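(* Let $\Sigma\cup\{x|y\}$ be a finite set of exclusion atoms. The problem of deciding whether $\Sigma\vdash x|y$ is decidable.
   Context: Letters $x,y,z,u,v,w,\dots$ denote finite tuples of variables; juxtaposition denotes concatenation. An exclusion atom is an expression $x|y$ with $|x|=|y|$. $\Sigma\vdash x|y$ means $x|y$ is derivable from $\Sigma$ using the rules (schemata over arbitrary tuples, atoms well-formed): (E1) $x|x\vdash y|z$; (E2) $x|y\vdash y|x$; (E3) $x|y\vdash xu|yv$; (E4) $xuu|yvv\vdash xu|yv$; (E5) $xyz|uvw\vdash xzy|uwv$ where $|x|=|u|$ and $|y|=|v|$; (E6) $xw|yw\vdash zz|xy$. *)

(* Defs.v *)
From Stdlib Require Import List Arith.
Import ListNotations.

Definition var := nat.
Definition tuple := list var.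
Definition atom : Type := (tuple * tuple)%type.

Definition wf_atom (a : atom) : Prop := length (fst a) = length (snd a).

(* derivable Sigma a  <->  Sigma |- a, using the rules (E1)-(E6), all atoms
   occurring in the rules being well formed. *)
Inductive derivable (Sigma : list atom) : atom -> Prop :=
| D_hyp : forall a, In a Sigma -> derivable Sigma a
| D_E1 : forall x y z, length y = length z ->
    derivable Sigma (x, x) -> derivable Sigma (y, z)
| D_E2 : forall x y, length x = length y ->
    derivable Sigma (x, y) -> derivable Sigma (y, x)
| D_E3 : forall x y u v, length x = length y -> length u = length v ->
    derivable Sigma (x, y) -> derivable Sigma (x ++ u, y ++ v)
| D_E4 : forall x y u v, length x = length y -> length u = length v ->
    derivable Sigma (x ++ u ++ u, y ++ v ++ v) -> derivable Sigma (x ++ u, y ++ v)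
| D_E5 : forall x y z u v w,
    length x = length u -> length y = length v -> length z = length w ->
    derivable Sigma (x ++ y ++ z, u ++ v ++ w) ->
    derivable Sigma (x ++ z ++ y, u ++ w ++ v)
| D_E6 : forall x y z w, length x = length y -> length z = length x ->
    derivable Sigma (x ++ w, y ++ w) -> derivable Sigma (z ++ z, x ++ y).

Inductive mu : Type :=
| MZero : mu
| MSucc : mu
| MProj : nat -> mu
| MComp : mu -> list mu -> mu
| MPrec : mu -> mu -> mu
| MMin  : mu -> mu.

Inductive eval : mu -> list nat -> nat -> Prop :=
| ev_zero : forall v, eval MZero v 0
| ev_succ : forall n v, eval MSucc (n :: v) (S n)
| ev_proj : forall i v, i < length v -> eval (MProj i) v (nth i v 0)
| ev_comp : forall f gs v ws r,
    evals gs v ws -> eval f ws r -> eval (MComp f gs) v r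
| ev_prec0 : forall f g v r, eval f v r -> eval (MPrec f g) (0 :: v) r
| ev_precS : forall f g n v r' r,
    eval (MPrec f g) (n :: v) r' -> eval g (n :: r' :: v) r ->
    eval (MPrec f g) (S n :: v) r
| ev_min : forall f v r,
    eval f (r :: v) 0 ->
    (forall k, k < r -> exists m, eval f (k :: v) (S m)) ->
    eval (MMin f) v r
with evals : list mu -> list nat -> list nat -> Prop :=
| evs_nil : forall v, evals [] v []
| evs_cons : forall g gs v w ws,
    eval g v w -> evals gs v ws -> evals (g :: gs) v (w :: ws).

Definition pair (a b : nat) : nat := (a + b) * (a + b + 1) / 2 + b.

Fixpoint code_list {A : Type} (c : A -> nat) (l : list A) : nat :=
  match l with
  | [] => 0
  | a :: l' => S (pair (c a) (code_list c l'))
  end.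

Definition code_tuple (x : tuple) : nat := code_list (fun n => n) x.
Definition code_atom (a : atom) : nat := pair (code_tuple (fst a)) (code_tuple (snd a)).
Definition code_instance (Sigma : list atom) (a : atom) : nat :=
  pair (code_list code_atom Sigma) (code_atom a).

Definition decidable_problem (P : list atom -> atom -> Prop) : Prop :=
  exists f : mu,
    (forall n, exists r, eval f [n] r) /\
    (forall Sigma a, Forall wf_atom Sigma -> wf_atom a ->
       (P Sigma a <-> eval f [code_instance Sigma a] 1)).

(* Main.v *)
Require Import Defs.
From Stdlib Require Import List Arith Lia Bool Permutation Classical.
Import ListNotations.

Inductive exp : Type :=
| EVar : nat -> exp
| EZero : exp
| ESucc : exp -> exp
| ERec : exp -> exp -> exp -> exp.

Fixpoint recf (i : nat) (s : nat -> nat -> nat) (m : nat) : nat :=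
  match m with 0 => i | S k => s k (recf i s k) end.

Fixpoint denote (env : list nat) (e : exp) : nat :=
  match e with
  | EVar i => nth i env 0
  | EZero => 0
  | ESucc e => S (denote env e)
  | ERec b i s => recf (denote env i) (fun k r => denote (k :: r :: env) s) (denote env b)
  end.

Definition projs (L : nat) : list mu := map MProj (seq 0 L).

Fixpoint compile (L : nat) (e : exp) : mu :=
  match e with
  | EVar i => if i <? L then MProj i else MZero
  | EZero => MZero
  | ESucc e => MComp MSucc [compile L e]
  | ERec b i s => MComp (MPrec (compile L i) (compile (S (S L)) s)) (compile L b :: projs L)
  end.

Lemma projs_eval_gen : forall env m k, k + m = length env ->
  evals (map MProj (seq k m)) env (skipn k env).
Proof.
  intros env m; induction m; intros k H.
  - simpl. rewrite skipn_all2 by lia. constructor.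
  - simpl. assert (Hk : k < length env) by lia.
    assert (E : skipn k env = nth k env 0 :: skipn (S k) env).
    { clear -Hk. revert env Hk; induction k; intros env Hk; destruct env; simpl in *; try lia; auto.
      apply IHk; lia. }
    rewrite E. constructor. constructor; auto. apply IHm; lia.
Qed.

Lemma projs_eval : forall env, evals (projs (length env)) env env.
Proof. intros. pose proof (projs_eval_gen env (length env) 0 eq_refl). simpl in H. exact H. Qed.

Lemma projs_det_gen : forall env m k ws, k + m = length env ->
  evals (map MProj (seq k m)) env ws -> ws = skipn k env.
Proof.
  intros env m; induction m; intros k ws H He.
  - simpl in He. inversion He; subst. rewrite skipn_all2 by lia. auto.
  - simpl in He. inversion He as [|g gs v w ws0 Hg Hgs]; subst. inversion Hg; subst.
    assert (Hk : k < length env) by lia.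
    assert (E : skipn k env = nth k env 0 :: skipn (S k) env).
    { clear -Hk. revert env Hk; induction k; intros env Hk; destruct env; simpl in *; try lia; auto.
      apply IHk; lia. }
    rewrite E. f_equal. apply IHm; auto; lia.
Qed.

Lemma compile_ok : forall e env, eval (compile (length env) e) env (denote env e).
Proof.
  induction e; intros env; simpl.
  - destruct (Nat.ltb_spec n (length env)).
    + constructor; auto.
    + rewrite nth_overflow by lia. constructor.
  - constructor.
  - econstructor. constructor. apply IHe. constructor. constructor.
  - econstructor. constructor. apply IHe1. apply projs_eval.
    generalize (denote env e1) as m. induction m; simpl.
    + constructor. apply IHe2.
    + econstructor. apply IHm. apply (IHe3 (m :: recf (denote env e2) (fun k r => denote (k :: r :: env) e3) m :: env)).
Qed.

Lemma compile_det : forall e env r, eval (compile (length env) e) env r -> r = denote env e.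
Proof.
  induction e; intros env r H; simpl in *.
  - destruct (Nat.ltb_spec n (length env)).
    + inversion H; subst; auto.
    + inversion H; subst. rewrite nth_overflow by lia. auto.
  - inversion H; auto.
  - inversion H as [| | | f gs v ws r0 Hws Hf | | |]; subst.
    inversion Hws as [|g gs0 v0 w ws0 Hg Hgs]; subst. inversion Hgs; subst.
    inversion Hf; subst. f_equal. apply IHe; auto.
  - inversion H as [| | | f gs v ws r0 Hws Hf | | |]; subst.
    inversion Hws as [|g gs0 v0 w ws0 Hg Hgs]; subst.
    apply IHe1 in Hg. subst.
    apply (projs_det_gen env (length env) 0) in Hgs; [|lia]. simpl in Hgs. subst.
    rename Hf into H4. clear H. revert r H4. generalize (denote env e1) as m. induction m; intros r H4; simpl.
    + inversion H4; subst. apply IHe2; auto.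
    + inversion H4 as [| | | | | f g n v r' r0 Hp Hg |]; subst. apply IHm in Hp. subst.
      apply (IHe3 (m :: _ :: env)); auto.
Qed.

Fixpoint lift (c n : nat) (e : exp) : exp :=
  match e with
  | EVar i => if i <? c then EVar i else EVar (i + n)
  | EZero => EZero
  | ESucc e => ESucc (lift c n e)
  | ERec b i s => ERec (lift c n b) (lift c n i) (lift (S (S c)) n s)
  end.

Lemma lift_ok : forall e env1 ins env2,
  denote (env1 ++ ins ++ env2) (lift (length env1) (length ins) e) = denote (env1 ++ env2) e.
Proof.
  induction e; intros env1 ins env2; simpl.
  - destruct (Nat.ltb_spec n (length env1)); simpl.
    + rewrite !app_nth1 by lia. auto.
    + rewrite app_nth2 by lia. rewrite (app_nth2 env1) by lia. rewrite app_nth2 by lia. f_equal. lia.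
  - auto.
  - rewrite IHe. auto.
  - rewrite IHe1, IHe2. generalize (denote (env1 ++ env2) e1) as m.
    induction m; simpl; auto. rewrite IHm.
    apply (IHe3 (m :: _ :: env1)).
Qed.

Definition sh (n : nat) (e : exp) := lift 0 n e.

Lemma d_sh1 : forall env e x k, denote env e = x -> denote (k :: env) (sh 1 e) = x.
Proof. intros. unfold sh. rewrite <- H. apply (lift_ok e [] [k] env). Qed.
Lemma d_sh2 : forall env e x k r, denote env e = x -> denote (k :: r :: env) (sh 2 e) = x.
Proof. intros. unfold sh. rewrite <- H. apply (lift_ok e [] [k; r] env). Qed.
Lemma d_sh3 : forall env e x k r q, denote env e = x -> denote (k :: r :: q :: env) (sh 3 e) = x.
Proof. intros. unfold sh. rewrite <- H. apply (lift_ok e [] [k; r; q] env). Qed.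
Lemma d_sh4 : forall env e x k r q p, denote env e = x -> denote (k :: r :: q :: p :: env) (sh 4 e) = x.
Proof. intros. unfold sh. rewrite <- H. apply (lift_ok e [] [k; r; q; p] env). Qed.

Lemma d_var0 : forall env k, denote (k :: env) (EVar 0) = k. Proof. auto. Qed.
Lemma d_var1 : forall env k r, denote (k :: r :: env) (EVar 1) = r. Proof. auto. Qed.
Lemma d_var2 : forall env k r q, denote (k :: r :: q :: env) (EVar 2) = q. Proof. auto. Qed.
Lemma d_var3 : forall env k r q p, denote (k :: r :: q :: p :: env) (EVar 3) = p. Proof. auto. Qed.

Lemma d_succ : forall env a x, denote env a = x -> denote env (ESucc a) = S x.
Proof. intros; simpl; auto. Qed.
Lemma d_zero : forall env, denote env EZero = 0. Proof. auto. Qed.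

Fixpoint ENum (c : nat) : exp := match c with 0 => EZero | S c => ESucc (ENum c) end.
Lemma d_num : forall env c, denote env (ENum c) = c.
Proof. induction c; simpl; auto. Qed.

Definition ELet (x body : exp) := ERec (ENum 1) x (lift 0 1 body).
Lemma d_let : forall env x body X Y, denote env x = X -> denote (X :: env) body = Y ->
  denote env (ELet x body) = Y.
Proof. intros. unfold ELet. simpl. rewrite H.
  rewrite <- H0. apply (lift_ok body [] [0] (X :: env)). Qed.

Definition EAdd a b := ERec a b (ESucc (EVar 1)).
Lemma d_add : forall env a b x y, denote env a = x -> denote env b = y -> denote env (EAdd a b) = x + y.
Proof. intros. simpl. subst. generalize (denote env a). induction n; simpl; auto. Qed.

Definition EPred a := ERec a EZero (EVar 0).
Lemma d_pred : forall env a x, denote env a = x -> denote env (EPred a) = pred x.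
Proof. intros. simpl. subst. destruct (denote env a); auto. Qed.

Definition ESub a b := ERec b a (EPred (EVar 1)).
Lemma d_sub : forall env a b x y, denote env a = x -> denote env b = y -> denote env (ESub a b) = x - y.
Proof. intros. simpl. subst. generalize (denote env b). induction n; simpl. lia.
  rewrite IHn. destruct (denote env a - n) eqn:E; simpl; lia. Qed.

Definition EMul a b := ERec a EZero (EAdd (EVar 1) (sh 2 b)).
Lemma d_mul : forall env a b x y, denote env a = x -> denote env b = y -> denote env (EMul a b) = x * y.
Proof. intros. unfold EMul. cbn [denote]. subst. generalize (denote env a). induction n; cbn [recf]; auto.
  erewrite d_add; [| reflexivity | apply d_sh2; reflexivity]. rewrite IHn. simpl. lia. Qed.

Fixpoint bsum (K : nat) (f : nat -> nat) : nat := match K with 0 => 0 | S K => bsum K f + f K end.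

Definition ESum bnd body := ERec bnd EZero (EAdd (EVar 1) (lift 1 1 body)).
Lemma d_sum : forall env bnd body B f, denote env bnd = B ->
  (forall k, denote (k :: env) body = f k) -> denote env (ESum bnd body) = bsum B f.
Proof. intros. unfold ESum. cbn [denote]. subst. generalize (denote env bnd). induction n; cbn [recf bsum]; auto.
  erewrite d_add; [| reflexivity | ]. 2:{ apply (lift_ok body [n] [_] env). }
  cbn [denote nth app]. rewrite IHn, H0. auto. Qed.

Definition EIter cnt init stp := ERec cnt init (lift 0 1 stp).
Lemma d_iter : forall env cnt init stp C I (f : nat -> nat), denote env cnt = C -> denote env init = I ->
  (forall r, denote (r :: env) stp = f r) -> denote env (EIter cnt init stp) = Nat.iter C f I.
Proof. intros. unfold EIter. cbn [denote]. subst. generalize (denote env cnt). induction n; cbn [recf Nat.iter]; auto.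
  pose proof (lift_ok stp [] [n] (recf (denote env init) (fun k r : nat => denote (k :: r :: env) (lift 0 1 stp)) n :: env)) as E.
  simpl in E. simpl. rewrite E, H1, IHn. auto. Qed.

Definition ENot a := ESub (ENum 1) a.
Lemma d_not : forall env a p, denote env a = Nat.b2n p -> denote env (ENot a) = Nat.b2n (negb p).
Proof. intros. unfold ENot. erewrite d_sub; [| apply d_num | eauto]. destruct p; auto. Qed.

Definition ESg a := ESub (ENum 1) (ESub (ENum 1) a).
Definition EAnd a b := EMul a b.
Lemma d_and : forall env a b p q, denote env a = Nat.b2n p -> denote env b = Nat.b2n q ->
  denote env (EAnd a b) = Nat.b2n (p && q).
Proof. intros. unfold EAnd. erewrite d_mul; eauto. destruct p, q; auto. Qed.
Definition EOr a b := ESg (EAdd a b).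
Lemma d_or : forall env a b p q, denote env a = Nat.b2n p -> denote env b = Nat.b2n q ->
  denote env (EOr a b) = Nat.b2n (p || q).
Proof. intros. unfold EOr, ESg.
  assert (E1 : denote env (EAdd a b) = Nat.b2n p + Nat.b2n q) by (apply d_add; auto).
  assert (E2 : denote env (ESub (ENum 1) (EAdd a b)) = 1 - (Nat.b2n p + Nat.b2n q)) by (apply d_sub; auto; apply d_num).
  rewrite (d_sub _ _ _ _ _ (d_num env 1) E2). destruct p, q; auto. Qed.
Definition EImp a b := EOr (ENot a) b.
Lemma d_imp : forall env a b p q, denote env a = Nat.b2n p -> denote env b = Nat.b2n q ->
  denote env (EImp a b) = Nat.b2n (implb p q).
Proof. intros. unfold EImp. erewrite d_or; [| apply d_not; eauto | eauto]. destruct p, q; auto. Qed.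

Definition ELe a b := ESub (ENum 1) (ESub a b).
Lemma d_le : forall env a b x y, denote env a = x -> denote env b = y ->
  denote env (ELe a b) = Nat.b2n (x <=? y).
Proof. intros. unfold ELe.
  assert (E2 : denote env (ESub a b) = x - y) by (apply d_sub; auto).
  rewrite (d_sub _ _ _ _ _ (d_num env 1) E2).
  destruct (Nat.leb_spec x y); cbn [Nat.b2n]; lia. Qed.
Definition EEq a b := EMul (ELe a b) (ELe b a).
Lemma d_eq : forall env a b x y, denote env a = x -> denote env b = y ->
  denote env (EEq a b) = Nat.b2n (x =? y).
Proof. intros. unfold EEq. erewrite d_mul; [| apply d_le; eauto | apply d_le; eauto].
  destruct (Nat.leb_spec x y), (Nat.leb_spec y x), (Nat.eqb_spec x y); cbn [Nat.b2n]; lia. Qed.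

Fixpoint bex (K : nat) (f : nat -> bool) : bool := match K with 0 => false | S K => bex K f || f K end.
Fixpoint ball (K : nat) (f : nat -> bool) : bool := match K with 0 => true | S K => ball K f && f K end.

Definition EEx bnd body := ESg (ESum bnd body).
Lemma d_ex : forall env bnd body B f, denote env bnd = B ->
  (forall k, denote (k :: env) body = Nat.b2n (f k)) -> denote env (EEx bnd body) = Nat.b2n (bex B f).
Proof. intros. unfold EEx, ESg.
  assert (E1 : denote env (ESum bnd body) = bsum B (fun k => Nat.b2n (f k))) by (apply d_sum; auto).
  assert (E2 : denote env (ESub (ENum 1) (ESum bnd body)) = 1 - bsum B (fun k => Nat.b2n (f k))) by (apply d_sub; auto; apply d_num).
  rewrite (d_sub _ _ _ _ _ (d_num env 1) E2). clear H E1 E2. induction B; cbn [bsum bex]; auto. destruct (bex B f), (f B); cbn [orb Nat.b2n] in *; lia. Qed.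
Definition EAll bnd body := ENot (EEx bnd (ENot body)).
Lemma d_all : forall env bnd body B f, denote env bnd = B ->
  (forall k, denote (k :: env) body = Nat.b2n (f k)) -> denote env (EAll bnd body) = Nat.b2n (ball B f).
Proof. intros. unfold EAll.
  assert (E : denote env (EEx bnd (ENot body)) = Nat.b2n (bex B (fun k => negb (f k)))).
  { apply d_ex; auto. intros; apply d_not; auto. }
  rewrite (d_not _ _ _ E). f_equal. clear. induction B; simpl; auto. rewrite <- IHB. destruct (bex B _), (f B); auto. Qed.

Lemma bsum_ext : forall K f g, (forall k, k < K -> f k = g k) -> bsum K f = bsum K g.
Proof. induction K; simpl; intros; auto. rewrite (IHK f g), H; auto. Qed.

Lemma bsum_zero : forall K f, (forall k, k < K -> f k = 0) -> bsum K f = 0.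
Proof. induction K; simpl; intros; auto. rewrite IHK, H; auto. Qed.

Lemma bsum_single : forall K f k0, k0 < K -> (forall k, k < K -> k <> k0 -> f k = 0) -> bsum K f = f k0.
Proof. induction K; simpl; intros. lia.
  destruct (Nat.eq_dec k0 K).
  - subst. rewrite bsum_zero; auto. intros; apply H0; lia.
  - rewrite (IHK f k0); try lia. rewrite (H0 K); lia. intros; apply H0; lia. Qed.

Definition EPow2 a := EIter a (ENum 1) (EAdd (EVar 0) (EVar 0)).
Lemma d_pow2 : forall env a x, denote env a = x -> denote env (EPow2 a) = 2 ^ x.
Proof. intros. unfold EPow2. rewrite (d_iter env a (ENum 1) _ x 1 (fun r => r + r)).
  - clear. induction x; simpl; auto. rewrite IHx. lia.
  - auto.
  - apply d_num.
  - intros. apply d_add; auto. Qed.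

Lemma bsum_lt : forall x q, bsum x (fun k => Nat.b2n (k <? q)) = Nat.min x q.
Proof. induction x; cbn [bsum]; intros; auto. rewrite IHx. destruct (Nat.ltb_spec x q); cbn [Nat.b2n]; lia. Qed.

Definition EDiv x d := ESum x (ELe (EMul (ESucc (EVar 0)) (sh 1 d)) (sh 1 x)).
Lemma d_div : forall env x d X D, denote env x = X -> denote env d = D -> 0 < D ->
  denote env (EDiv x d) = X / D.
Proof. intros. unfold EDiv. rewrite (d_sum env x _ X (fun k => Nat.b2n (S k * D <=? X))); auto.
  - rewrite (bsum_ext X _ (fun k => Nat.b2n (k <? X / D))).
    + rewrite bsum_lt. assert (X / D <= X) by (apply Nat.Div0.div_le_upper_bound; nia). lia.
    + intros. f_equal. destruct (Nat.leb_spec (S k * D) X), (Nat.ltb_spec k (X / D)); auto.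
      * exfalso. assert (S k <= X / D). { apply Nat.div_le_lower_bound; lia. } lia.
      * exfalso. assert (S k * D <= X / D * D). { apply Nat.mul_le_mono_r; lia. }
        pose proof (Nat.Div0.mul_div_le X D). lia.
  - intros. apply d_le. apply d_mul. apply d_succ. reflexivity. apply d_sh1; auto. apply d_sh1; auto.
Qed.

Definition EMod2 y := ESub y (EMul (ENum 2) (EDiv y (ENum 2))).
Lemma d_mod2 : forall env y Y, denote env y = Y -> denote env (EMod2 y) = Y mod 2.
Proof. intros. unfold EMod2. rewrite (d_sub env _ _ Y (2 * (Y / 2))).
  - pose proof (Nat.div_mod_eq Y 2). lia.
  - auto.
  - apply d_mul. apply d_num. apply d_div; auto. Qed.

Definition bit x i := (x / 2 ^ i) mod 2.
Definition bitb x i := bit x i =? 1.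
Definition EBitb x i := EEq (EMod2 (EDiv x (EPow2 i))) (ENum 1).
Lemma d_bitb : forall env x i X I, denote env x = X -> denote env i = I ->
  denote env (EBitb x i) = Nat.b2n (bitb X I).
Proof. intros. unfold EBitb, bitb, bit. apply d_eq. apply d_mod2. apply d_div; auto.
  apply d_pow2; auto. pose proof (Nat.pow_nonzero 2 I). lia. apply d_num. Qed.

Definition EPair a b := EAdd (EDiv (EMul (EAdd a b) (ESucc (EAdd a b))) (ENum 2)) b.
Lemma d_pair : forall env a b x y, denote env a = x -> denote env b = y ->
  denote env (EPair a b) = pair x y.
Proof. intros. unfold EPair, pair. apply d_add; auto. rewrite Nat.add_1_r.
  apply d_div. apply d_mul. apply d_add; auto. apply d_succ. apply d_add; auto. apply d_num. lia. Qed.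

Definition tri s := s * (s + 1) / 2.
Lemma tri_S : forall s, tri (S s) = tri s + S s.
Proof. intros. unfold tri. replace (S s * (S s + 1)) with (s * (s + 1) + (S s) * 2) by lia.
  rewrite Nat.div_add; lia. Qed.
Lemma tri_mono : forall s s', s < s' -> tri s + s < tri s'.
Proof. intros. induction H. rewrite tri_S. lia. rewrite tri_S. lia. Qed.
Lemma pair_tri : forall a b, pair a b = tri (a + b) + b.
Proof. reflexivity. Qed.
Lemma pair_inj : forall a b a' b', pair a b = pair a' b' -> a = a' /\ b = b'.
Proof. intros. rewrite !pair_tri in H.
  destruct (Nat.lt_trichotomy (a + b) (a' + b')) as [Hl | [He | Hl]].
  - pose proof (tri_mono _ _ Hl). lia.
  - rewrite He in H. lia.
  - pose proof (tri_mono _ _ Hl). lia. Qed.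
Lemma tri_ge : forall s, s <= tri s.
Proof. induction s; simpl; auto. rewrite tri_S. lia. Qed.
Lemma pair_ge : forall a b, a + b <= pair a b.
Proof. intros. rewrite pair_tri. pose proof (tri_ge (a + b)). lia. Qed.
Lemma tri_le : forall s s', s <= s' -> tri s <= tri s'.
Proof. intros. induction H; auto. rewrite tri_S. lia. Qed.
Lemma pair_mono : forall a b a' b', a <= a' -> b <= b' -> pair a b <= pair a' b'.
Proof. intros. rewrite !pair_tri. pose proof (tri_le (a + b) (a' + b')). lia. Qed.

Definition unp1 c := bsum (S c) (fun a => a * bsum (S c) (fun b => Nat.b2n (pair a b =? c))).
Definition unp2 c := bsum (S c) (fun a => bsum (S c) (fun b => b * Nat.b2n (pair a b =? c))).

Lemma unp1_pair : forall a b, unp1 (pair a b) = a.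
Proof. intros. unfold unp1. pose proof (pair_ge a b).
  rewrite (bsum_single _ _ a); try lia.
  - rewrite (bsum_single _ _ b); try lia. rewrite Nat.eqb_refl. simpl. lia.
    intros. destruct (Nat.eqb_spec (pair a k) (pair a b)); auto. apply pair_inj in e. lia.
  - intros. rewrite bsum_zero. lia. intros.
    destruct (Nat.eqb_spec (pair k k0) (pair a b)); auto. apply pair_inj in e. lia. Qed.
Lemma unp2_pair : forall a b, unp2 (pair a b) = b.
Proof. intros. unfold unp2. pose proof (pair_ge a b).
  rewrite (bsum_single _ _ a); try lia.
  - rewrite (bsum_single _ _ b); try lia. rewrite Nat.eqb_refl. simpl. lia.
    intros. destruct (Nat.eqb_spec (pair a k) (pair a b)); simpl; try lia. apply pair_inj in e. lia.
  - intros. rewrite bsum_zero. lia. intros.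
    destruct (Nat.eqb_spec (pair k k0) (pair a b)); simpl; try lia. apply pair_inj in e. lia. Qed.

Definition EUnp1 c := ESum (ESucc c) (EMul (EVar 0) (ESum (ESucc (sh 1 c)) (EEq (EPair (EVar 1) (EVar 0)) (sh 2 c)))).
Definition EUnp2 c := ESum (ESucc c) (ESum (ESucc (sh 1 c)) (EMul (EVar 0) (EEq (EPair (EVar 1) (EVar 0)) (sh 2 c)))).
Lemma d_unp1 : forall env c C, denote env c = C -> denote env (EUnp1 c) = unp1 C.
Proof. intros. unfold EUnp1, unp1. apply d_sum. apply d_succ; auto. intros a.
  apply d_mul. reflexivity. apply d_sum. apply d_succ. apply d_sh1; auto. intros b.
  apply d_eq. apply d_pair; reflexivity. apply d_sh2; auto. Qed.
Lemma d_unp2 : forall env c C, denote env c = C -> denote env (EUnp2 c) = unp2 C.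
Proof. intros. unfold EUnp2, unp2. apply d_sum. apply d_succ; auto. intros a.
  apply d_sum. apply d_succ. apply d_sh1; auto. intros b.
  apply d_mul. reflexivity. apply d_eq. apply d_pair; reflexivity. apply d_sh2; auto. Qed.

Definition ctl c := unp2 (pred c).
Definition chd c := unp1 (pred c).
Definition tli k c := Nat.iter k ctl c.
Definition ETl c := EUnp2 (EPred c).
Definition EHd c := EUnp1 (EPred c).
Definition ETli k c := EIter k c (ETl (EVar 0)).
Lemma d_tl : forall env c C, denote env c = C -> denote env (ETl c) = ctl C.
Proof. intros. apply d_unp2. apply d_pred; auto. Qed.
Lemma d_hd : forall env c C, denote env c = C -> denote env (EHd c) = chd C.
Proof. intros. apply d_unp1. apply d_pred; auto. Qed.
Lemma d_tli : forall env k c K C, denote env k = K -> denote env c = C -> denote env (ETli k c) = tli K C.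
Proof. intros. unfold ETli, tli. apply d_iter; auto. intros. apply d_tl; reflexivity. Qed.

Definition Pn n := S (pair n n).
Definition Nn n := 2 ^ Pn n.
Definition memb S i j := bitb S (pair i j).
Definition inA c i j := bex c (fun k => (negb (tli k (unp1 c) =? 0) && (chd (tli k (unp1 c)) =? i)) && (chd (tli k (unp2 c)) =? j)).
Definition sigsub n Sc T := bex Sc (fun m => negb (tli m Sc =? 0) &&
   ball (S n) (fun i => ball (S n) (fun j => implb (inA (chd (tli m Sc)) i j) (memb T i j)))).
Definition subm n S0 T := ball (S n) (fun i => ball (S n) (fun j => implb (memb S0 i j) (memb T i j))).
Definition subTm n S0 T := ball (S n) (fun i => ball (S n) (fun j => implb (memb S0 i j) (memb T j i))).
Definition r6 n S0 T := ball (S n) (fun i => ball (S n) (fun j =>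
   implb (memb S0 i j && negb (i =? j)) (bex (S n) (fun z => memb T z i && memb T z j)))).
Definition newb n Sc F T := (bitb F T || sigsub n Sc T) ||
   bex (Nn n) (fun S0 => bitb F S0 && ((subm n S0 T || subTm n S0 T) || r6 n S0 T)).
Definition step n Sc F := bsum (Nn n) (fun T => 2 ^ T * Nat.b2n (newb n Sc F T)).
Definition fin n Sc := Nat.iter (S (Nn n)) (step n Sc) 0.
Definition dec n := bex (Nn n) (fun T => bitb (fin n (unp1 n)) T &&
   ball (S n) (fun i => ball (S n) (fun j => implb (memb T i j) (inA (unp2 n) i j)))).

Definition EMemb S0 i j := EBitb S0 (EPair i j).
Lemma d_memb : forall env s i j X I J, denote env s = X -> denote env i = I -> denote env j = J ->
  denote env (EMemb s i j) = Nat.b2n (memb X I J).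
Proof. intros. apply d_bitb; auto. apply d_pair; auto. Qed.

Definition EInA c i j := EEx c (EAnd (EAnd (ENot (EEq (ETli (EVar 0) (EUnp1 (sh 1 c))) EZero))
   (EEq (EHd (ETli (EVar 0) (EUnp1 (sh 1 c)))) (sh 1 i))) (EEq (EHd (ETli (EVar 0) (EUnp2 (sh 1 c)))) (sh 1 j))).
Lemma d_inA : forall env c i j C I J, denote env c = C -> denote env i = I -> denote env j = J ->
  denote env (EInA c i j) = Nat.b2n (inA C I J).
Proof. intros. unfold EInA, inA. apply d_ex; auto. intros k.
  repeat (match goal with
 | |- denote _ (EAnd _ _) = _ => apply d_and
 | |- denote _ (ENot _) = _ => apply d_not
 | |- denote _ (EEq _ _) = _ => apply d_eq
 | |- denote _ (ETli _ _) = _ => apply d_tli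
 | |- denote _ (EHd _) = _ => apply d_hd
 | |- denote _ (EUnp1 _) = _ => apply d_unp1
 | |- denote _ (EUnp2 _) = _ => apply d_unp2
 | |- denote _ EZero = _ => apply d_zero
 | |- denote _ (EVar _) = _ => reflexivity
 | |- denote _ (sh 1 _) = _ => apply d_sh1; assumption
 end). Qed.

Ltac dstep := match goal with
 | |- forall _, _ => intro
 | |- denote _ (EAll _ _) = _ => apply d_all
 | |- denote _ (EEx _ _) = _ => apply d_ex
 | |- denote _ (EAnd _ _) = _ => apply d_and
 | |- denote _ (EOr _ _) = _ => apply d_or
 | |- denote _ (EImp _ _) = _ => apply d_imp
 | |- denote _ (ENot _) = _ => apply d_not
 | |- denote _ (EEq _ _) = _ => apply d_eq
 | |- denote _ (ETli _ _) = _ => apply d_tli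
 | |- denote _ (EHd _) = _ => apply d_hd
 | |- denote _ (EUnp1 _) = _ => apply d_unp1
 | |- denote _ (EUnp2 _) = _ => apply d_unp2
 | |- denote _ (EMemb _ _ _) = _ => apply d_memb
 | |- denote _ (EInA _ _ _) = _ => apply d_inA
 | |- denote _ (EBitb _ _) = _ => apply d_bitb
 | |- denote _ (ESucc _) = _ => apply d_succ
 | |- denote _ (EPair _ _) = _ => apply d_pair
 | |- denote _ (EPow2 _) = _ => apply d_pow2
 | |- denote _ (EMul _ _) = _ => apply d_mul
 | |- denote _ EZero = _ => apply d_zero
 | |- denote _ (EVar _) = _ => reflexivity
 | |- denote _ (sh 1 _) = _ => apply d_sh1; assumption
 | |- denote _ (sh 2 _) = _ => apply d_sh2; assumption
 | |- denote _ (sh 3 _) = _ => apply d_sh3; assumption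
 | |- denote _ (sh 4 _) = _ => apply d_sh4; assumption
 | |- _ => assumption
 end.
Ltac dsolve := repeat dstep.

Definition ESigsub n Sc T := EEx Sc (EAnd (ENot (EEq (ETli (EVar 0) (sh 1 Sc)) EZero))
  (EAll (ESucc (sh 1 n)) (EAll (ESucc (sh 2 n)) (EImp (EInA (EHd (ETli (EVar 2) (sh 3 Sc))) (EVar 1) (EVar 0))
     (EMemb (sh 3 T) (EVar 1) (EVar 0)))))).
Lemma d_sigsub : forall env n Sc T N0 S0 T0, denote env n = N0 -> denote env Sc = S0 -> denote env T = T0 ->
  denote env (ESigsub n Sc T) = Nat.b2n (sigsub N0 S0 T0).
Proof. intros. unfold ESigsub, sigsub. dsolve. Qed.

Definition ESubm n S0 T := EAll (ESucc n) (EAll (ESucc (sh 1 n))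
  (EImp (EMemb (sh 2 S0) (EVar 1) (EVar 0)) (EMemb (sh 2 T) (EVar 1) (EVar 0)))).
Lemma d_subm : forall env n s T N0 S0 T0, denote env n = N0 -> denote env s = S0 -> denote env T = T0 ->
  denote env (ESubm n s T) = Nat.b2n (subm N0 S0 T0).
Proof. intros. unfold ESubm, subm. dsolve. Qed.

Definition ESubTm n S0 T := EAll (ESucc n) (EAll (ESucc (sh 1 n))
  (EImp (EMemb (sh 2 S0) (EVar 1) (EVar 0)) (EMemb (sh 2 T) (EVar 0) (EVar 1)))).
Lemma d_subTm : forall env n s T N0 S0 T0, denote env n = N0 -> denote env s = S0 -> denote env T = T0 ->
  denote env (ESubTm n s T) = Nat.b2n (subTm N0 S0 T0).
Proof. intros. unfold ESubTm, subTm. dsolve. Qed.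

Definition ER6 n S0 T := EAll (ESucc n) (EAll (ESucc (sh 1 n))
  (EImp (EAnd (EMemb (sh 2 S0) (EVar 1) (EVar 0)) (ENot (EEq (EVar 1) (EVar 0))))
    (EEx (ESucc (sh 2 n)) (EAnd (EMemb (sh 3 T) (EVar 0) (EVar 2)) (EMemb (sh 3 T) (EVar 0) (EVar 1)))))).
Lemma d_r6 : forall env n s T N0 S0 T0, denote env n = N0 -> denote env s = S0 -> denote env T = T0 ->
  denote env (ER6 n s T) = Nat.b2n (r6 N0 S0 T0).
Proof. intros. unfold ER6, r6. dsolve. Qed.

Definition EN n := EPow2 (ESucc (EPair n n)).
Lemma d_N : forall env n N0, denote env n = N0 -> denote env (EN n) = Nn N0.
Proof. intros. unfold EN, Nn, Pn. dsolve. Qed.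

Definition ENewb n Sc F T := EOr (EOr (EBitb F T) (ESigsub n Sc T))
  (EEx (EN n) (EAnd (EBitb (sh 1 F) (EVar 0))
     (EOr (EOr (ESubm (sh 1 n) (EVar 0) (sh 1 T)) (ESubTm (sh 1 n) (EVar 0) (sh 1 T))) (ER6 (sh 1 n) (EVar 0) (sh 1 T))))).
Lemma d_newb : forall env n Sc F T N0 S0 F0 T0, denote env n = N0 -> denote env Sc = S0 ->
  denote env F = F0 -> denote env T = T0 ->
  denote env (ENewb n Sc F T) = Nat.b2n (newb N0 S0 F0 T0).
Proof. intros. unfold ENewb, newb. apply d_or. apply d_or. dsolve. apply d_sigsub; auto.
  apply d_ex. apply d_N; auto. intros s. dsolve.
  apply d_subm; dsolve. apply d_subTm; dsolve. apply d_r6; dsolve. Qed.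

Definition EStep n Sc F := ESum (EN n) (EMul (EPow2 (EVar 0)) (ENewb (sh 1 n) (sh 1 Sc) (sh 1 F) (EVar 0))).
Lemma d_step : forall env n Sc F N0 S0 F0, denote env n = N0 -> denote env Sc = S0 -> denote env F = F0 ->
  denote env (EStep n Sc F) = step N0 S0 F0.
Proof. intros. unfold EStep, step. apply d_sum. apply d_N; auto. intros T. dsolve.
  apply d_newb; dsolve. Qed.

Definition EFin n Sc := EIter (ESucc (EN n)) EZero (EStep (sh 1 n) (sh 1 Sc) (EVar 0)).
Lemma d_fin : forall env n Sc N0 S0, denote env n = N0 -> denote env Sc = S0 ->
  denote env (EFin n Sc) = fin N0 S0.
Proof. intros. unfold EFin, fin. apply d_iter. apply d_succ. apply d_N; auto. reflexivity.
  intros. apply d_step; dsolve. Qed.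

Definition EDec := ELet (EUnp1 (EVar 0)) (ELet (EUnp2 (EVar 1)) (ELet (EFin (EVar 2) (EVar 1))
  (EEx (EN (EVar 3)) (EAnd (EBitb (EVar 1) (EVar 0)) (EAll (ESucc (EVar 4)) (EAll (ESucc (EVar 5))
     (EImp (EMemb (EVar 2) (EVar 1) (EVar 0)) (EInA (EVar 4) (EVar 1) (EVar 0))))))))).
Lemma d_dec : forall n, denote [n] EDec = Nat.b2n (dec n).
Proof. intros. unfold EDec, dec. eapply d_let. apply d_unp1; reflexivity.
  eapply d_let. apply d_unp2; reflexivity. eapply d_let. apply d_fin; reflexivity.
  apply d_ex. apply d_N; reflexivity. dsolve. Qed.

Lemma dec_computable : exists f : mu, (forall n, exists r, eval f [n] r) /\
  (forall n, eval f [n] 1 <-> dec n = true).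
Proof. exists (compile 1 EDec). split.
  - intros n. exists (denote [n] EDec). apply (compile_ok EDec [n]).
  - intros n. split.
    + intros H. apply (compile_det EDec [n]) in H. rewrite d_dec in H. destruct (dec n); simpl in *; congruence.
    + intros H. pose proof (compile_ok EDec [n]). rewrite d_dec, H in H0. exact H0. Qed.

Lemma bex_iff : forall K f, bex K f = true <-> exists k, k < K /\ f k = true.
Proof. induction K; simpl; intros. split. discriminate. intros [k [H _]]; lia.
  rewrite orb_true_iff, IHK. split.
  - intros [[k [H1 H2]] | H]. exists k; split; auto; lia. exists K; auto.
  - intros [k [H1 H2]]. destruct (Nat.eq_dec k K). subst; auto. left; exists k; split; auto; lia. Qed.

Lemma ball_iff : forall K f, ball K f = true <-> forall k, k < K -> f k = true.
Proof. induction K; simpl; intros. split; auto; intros; lia.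
  rewrite andb_true_iff, IHK. split.
  - intros [H1 H2] k Hk. destruct (Nat.eq_dec k K). subst; auto. apply H1; lia.
  - intros H. split. intros; apply H; lia. apply H; lia. Qed.

Lemma bex_ext : forall K f g, (forall k, k < K -> f k = g k) -> bex K f = bex K g.
Proof. induction K; simpl; intros; auto. rewrite (IHK f g), H; auto. Qed.

Definition msum K (c : nat -> nat) := bsum K (fun t => 2 ^ t * c t).

Lemma msum_lt : forall K c, (forall t, c t <= 1) -> msum K c < 2 ^ K.
Proof. induction K; intros. unfold msum; simpl. lia. unfold msum in *. cbn [bsum]. specialize (IHK c H).
  specialize (H K). rewrite Nat.pow_succ_r'. destruct (c K) as [|[|]]; lia. Qed.

Lemma pow2_pos : forall k, 0 < 2 ^ k.
Proof. intros. pose proof (Nat.pow_nonzero 2 k). lia. Qed.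

Lemma bit_msum : forall K c t, (forall t, c t <= 1) -> t < K -> bit (msum K c) t = c t.
Proof. induction K; intros c t Hc Ht. lia.
  unfold bit, msum in *. simpl bsum. fold (msum K c).
  destruct (Nat.eq_dec t K).
  - subst. rewrite Nat.mul_comm. rewrite Nat.div_add by (pose proof (pow2_pos K); lia).
    rewrite Nat.div_small by (apply msum_lt; auto). simpl. specialize (Hc K).
    destruct (c K) as [|[|]]; simpl; auto; lia.
  - assert (t < K) by lia. replace (2 ^ K) with (2 ^ t * 2 ^ (K - t)).
    2:{ rewrite <- Nat.pow_add_r. f_equal. lia. }
    replace (2 ^ t * 2 ^ (K - t) * c K) with ((2 ^ (K - t) * c K) * 2 ^ t) by lia.
    rewrite Nat.div_add by (pose proof (pow2_pos t); lia).
    replace (K - t) with (S (K - t - 1)) by lia. rewrite Nat.pow_succ_r'.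
    replace (2 * 2 ^ (K - t - 1) * c K) with ((2 ^ (K - t - 1) * c K) * 2) by lia.
    rewrite Nat.Div0.mod_add. apply IHK; auto. Qed.

Lemma bitb_msum : forall K c t, (forall t, c t <= 1) -> t < K -> bitb (msum K c) t = (c t =? 1).
Proof. intros. unfold bitb. rewrite bit_msum; auto. Qed.

Lemma bitb_0 : forall t, bitb 0 t = false.
Proof. intros. unfold bitb, bit. rewrite Nat.Div0.div_0_l. reflexivity. Qed.

Lemma b2n_le1 : forall b, Nat.b2n b <= 1. Proof. destruct b; simpl; lia. Qed.
Lemma b2n_eq1 : forall b, (Nat.b2n b =? 1) = b. Proof. destruct b; reflexivity. Qed.

Definition mk n (Q : nat -> nat -> bool) := msum (Pn n) (fun p => Nat.b2n (Q (unp1 p) (unp2 p))).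

Lemma pair_lt_P : forall n i j, i <= n -> j <= n -> pair i j < Pn n.
Proof. intros. unfold Pn. pose proof (pair_mono i j n n H H0). lia. Qed.

Lemma mk_lt : forall n Q, mk n Q < Nn n.
Proof. intros. unfold mk, Nn. apply msum_lt. intros; apply b2n_le1. Qed.

Lemma memb_mk : forall n Q i j, i <= n -> j <= n -> memb (mk n Q) i j = Q i j.
Proof. intros. unfold memb, mk. rewrite bitb_msum. rewrite unp1_pair, unp2_pair. apply b2n_eq1.
  intros; apply b2n_le1. apply pair_lt_P; auto. Qed.

Lemma memb_0 : forall i j, memb 0 i j = false.
Proof. intros. apply bitb_0. Qed.

Lemma ctl_cons : forall {A} (c : A -> nat) x l, ctl (code_list c (x :: l)) = code_list c l.
Proof. intros. unfold ctl. simpl. apply unp2_pair. Qed.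
Lemma chd_cons : forall {A} (c : A -> nat) x l, chd (code_list c (x :: l)) = c x.
Proof. intros. unfold chd. simpl. apply unp1_pair. Qed.
Lemma ctl_0 : ctl 0 = 0.
Proof. unfold ctl. simpl. change 0 with (pair 0 0) at 1. apply unp2_pair. Qed.
Lemma ctl_code : forall {A} (c : A -> nat) l, ctl (code_list c l) = code_list c (List.tl l).
Proof. intros. destruct l. apply ctl_0. apply ctl_cons. Qed.
Lemma tli_code : forall {A} (c : A -> nat) k l, tli k (code_list c l) = code_list c (skipn k l).
Proof. unfold tli. induction k; intros; auto. rewrite Nat.iter_succ_r. rewrite ctl_code.
  rewrite IHk. destruct l; simpl; auto. destruct k; auto. Qed.
Lemma code_list_0 : forall {A} (c : A -> nat) l, code_list c l = 0 <-> l = [].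
Proof. intros. destruct l; simpl; split; congruence. Qed.
Lemma length_code : forall {A} (c : A -> nat) l, length l <= code_list c l.
Proof. induction l; simpl; auto. pose proof (pair_ge (c a) (code_list c l)). lia. Qed.
Lemma elem_code : forall {A} (c : A -> nat) l x, In x l -> c x <= code_list c l.
Proof. induction l; simpl; intros. contradiction. destruct H. subst.
  pose proof (pair_ge (c x) (code_list c l)); lia. apply IHl in H.
  pose proof (pair_ge (c a) (code_list c l)); lia. Qed.

Lemma skipn_nth_cons : forall {A} k (l : list A) d, k < length l -> skipn k l = nth k l d :: skipn (S k) l.
Proof. induction k; intros; destruct l; simpl in *; try lia; auto. apply IHk. lia. Qed.

Definition pairsOf (a : atom) := combine (fst a) (snd a).

Lemma in_combine_iff : forall (x y : list nat) i j, length x = length y ->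
  (In (i, j) (combine x y) <-> exists k, k < length x /\ nth k x 0 = i /\ nth k y 0 = j).
Proof. intros. split.
  - intros Hin. apply (In_nth _ _ (0, 0)) in Hin. destruct Hin as [k [Hk He]].
    rewrite length_combine in Hk. rewrite combine_nth in He by auto. inversion He.
    exists k. split; auto. lia.
  - intros [k [Hk [H1 H2]]]. subst. rewrite <- combine_nth by auto. apply nth_In.
    rewrite length_combine. lia. Qed.

Lemma inA_iff : forall a i j, wf_atom a -> (inA (code_atom a) i j = true <-> In (i, j) (pairsOf a)).
Proof. intros [x y] i j Hw. unfold wf_atom in Hw; simpl in Hw. unfold tuple, var in *. unfold inA, code_atom, pairsOf. simpl.
  rewrite unp1_pair, unp2_pair. rewrite bex_iff, in_combine_iff by auto. unfold code_tuple.
  split.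
  - intros [k [Hk Hf]]. rewrite !andb_true_iff in Hf. destruct Hf as [[H1 H2] H3].
    rewrite !tli_code in *. apply negb_true_iff in H1. apply Nat.eqb_neq in H1.
    apply Nat.eqb_eq in H2, H3.
    assert (Hk' : k < length x). { destruct (Nat.lt_ge_cases k (length x)); auto.
      rewrite skipn_all2 in H1 by auto. simpl in H1. lia. }
    exists k. split; auto. rewrite (skipn_nth_cons (A:=nat) k x 0) in H2 by auto.
    rewrite (skipn_nth_cons (A:=nat) k y 0) in H3 by lia. rewrite chd_cons in H2, H3. auto.
  - intros [k [Hk [H1 H2]]]. exists k. split.
    + pose proof (length_code (fun n => n) x).
      pose proof (pair_ge (code_list (fun n => n) x) (code_list (fun n => n) y)). lia.
    + rewrite !tli_code. rewrite (skipn_nth_cons (A:=nat) k x 0) by auto.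
      rewrite (skipn_nth_cons (A:=nat) k y 0) by lia. rewrite !chd_cons. simpl. subst.
      rewrite !Nat.eqb_refl. auto. Qed.

Lemma var_bound_tuple : forall x v, In v x -> v <= code_tuple x.
Proof. intros. apply (elem_code (fun n => n) x v H). Qed.

Definition atom_vars_le n (a : atom) := (forall v, In v (fst a) -> v <= n) /\ (forall v, In v (snd a) -> v <= n).

Lemma atom_bound : forall a, atom_vars_le (code_atom a) a.
Proof. intros [x y]. unfold code_atom; simpl. split; intros v Hv; simpl in Hv.
  - pose proof (var_bound_tuple x v Hv). pose proof (pair_ge (code_tuple x) (code_tuple y)). simpl. lia.
  - pose proof (var_bound_tuple y v Hv). pose proof (pair_ge (code_tuple x) (code_tuple y)). simpl. lia. Qed.

Lemma instance_bound_a : forall Sig a, atom_vars_le (code_instance Sig a) a.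
Proof. intros. destruct (atom_bound a) as [H1 H2]. unfold code_instance.
  pose proof (pair_ge (code_list code_atom Sig) (code_atom a)). split; intros v Hv.
  apply H1 in Hv; lia. apply H2 in Hv; lia. Qed.

Lemma instance_bound_sig : forall Sig a s, In s Sig -> atom_vars_le (code_instance Sig a) s.
Proof. intros. destruct (atom_bound s) as [H1 H2]. unfold code_instance.
  pose proof (pair_ge (code_list code_atom Sig) (code_atom a)).
  pose proof (elem_code code_atom Sig s H). split; intros v Hv.
  apply H1 in Hv; lia. apply H2 in Hv; lia. Qed.

Lemma pairs_bound : forall n a i j, atom_vars_le n a -> In (i, j) (pairsOf a) -> i <= n /\ j <= n.
Proof. intros n [x y] i j [H1 H2] Hin. unfold pairsOf in Hin; simpl in *. split.
  apply H1. eapply in_combine_l; eauto. apply H2. eapply in_combine_r; eauto. Qed.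

Lemma sigsub_iff : forall Sig n T, Forall wf_atom Sig ->
  (sigsub n (code_list code_atom Sig) T = true <->
   exists s, In s Sig /\ forall i j, i <= n -> j <= n -> In (i, j) (pairsOf s) -> memb T i j = true).
Proof. intros. unfold sigsub. rewrite bex_iff. split.
  - intros [m [Hm Hf]]. apply andb_true_iff in Hf. destruct Hf as [H1 H2].
    rewrite tli_code in *. apply negb_true_iff, Nat.eqb_neq in H1.
    assert (Hk' : m < length Sig). { destruct (Nat.lt_ge_cases m (length Sig)); auto.
      rewrite skipn_all2 in H1 by auto. simpl in H1. lia. }
    rewrite (skipn_nth_cons m Sig ([], [])) in H2 by auto. rewrite chd_cons in H2.
    exists (nth m Sig ([], [])). split. apply nth_In; auto.
    intros i j Hi Hj Hin. rewrite ball_iff in H2. specialize (H2 i ltac:(lia)). rewrite ball_iff in H2.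
    specialize (H2 j ltac:(lia)). rewrite implb_true_iff in H2. apply H2. apply inA_iff; auto.
    rewrite Forall_forall in H. apply H. apply nth_In; auto.
  - intros [s [Hs Hf]]. apply In_nth with (d := ([], [])) in Hs. destruct Hs as [m [Hm Hsm]].
    exists m. split. pose proof (length_code code_atom Sig). lia.
    rewrite tli_code. rewrite (skipn_nth_cons m Sig ([], [])) by auto. rewrite chd_cons.
    apply andb_true_iff. split. simpl. auto.
    rewrite ball_iff. intros i Hi. rewrite ball_iff. intros j Hj. rewrite implb_true_iff. intros Hin.
    rewrite Hsm in Hin. apply inA_iff in Hin. apply Hf; auto; lia.
    rewrite Forall_forall in H. apply H. subst. apply nth_In; auto. Qed.

Inductive Cl (n Sc : nat) : nat -> Prop :=
| cl_sig : forall T, T < Nn n -> sigsub n Sc T = true -> Cl n Sc T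
| cl_rule : forall S0 T, Cl n Sc S0 -> S0 < Nn n -> T < Nn n ->
    ((subm n S0 T || subTm n S0 T) || r6 n S0 T) = true -> Cl n Sc T.

Lemma step_msum : forall n Sc F, step n Sc F = msum (Nn n) (fun T => Nat.b2n (newb n Sc F T)).
Proof. reflexivity. Qed.

Lemma bitb_step : forall n Sc F T, T < Nn n -> bitb (step n Sc F) T = newb n Sc F T.
Proof. intros. rewrite step_msum, bitb_msum; auto. apply b2n_eq1. intros; apply b2n_le1. Qed.

Definition G n Sc k := Nat.iter k (step n Sc) 0.

Lemma fin_sound_gen : forall n Sc k T, T < Nn n -> bitb (G n Sc k) T = true -> Cl n Sc T.
Proof. intros n Sc k. induction k; intros T HT H.
  - simpl in H. rewrite bitb_0 in H. discriminate.
  - unfold G in H. rewrite Nat.iter_succ in H. fold (G n Sc k) in H. rewrite bitb_step in H by auto.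
    unfold newb in H. rewrite !orb_true_iff in H. destruct H as [[H | H] | H].
    + apply IHk; auto.
    + apply cl_sig; auto.
    + apply bex_iff in H. destruct H as [s [Hs Hb]]. apply andb_true_iff in Hb. destruct Hb as [Hb Hr].
      apply cl_rule with s; auto. Qed.

Lemma newb_ext : forall n Sc F F' T, T < Nn n -> (forall t, t < Nn n -> bitb F t = bitb F' t) ->
  newb n Sc F T = newb n Sc F' T.
Proof. intros. unfold newb. rewrite H0 by auto. f_equal. apply bex_ext. intros. rewrite H0; auto. Qed.

Lemma step_ext : forall n Sc F F', (forall t, t < Nn n -> bitb F t = bitb F' t) -> step n Sc F = step n Sc F'.
Proof. intros. rewrite !step_msum. unfold msum. apply bsum_ext. intros. rewrite (newb_ext n Sc F F'); auto. Qed.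

Lemma G_mono : forall n Sc k T, T < Nn n -> bitb (G n Sc k) T = true -> bitb (G n Sc (S k)) T = true.
Proof. intros. unfold G. rewrite Nat.iter_succ. rewrite bitb_step by auto. unfold newb. fold (G n Sc k).
  rewrite H0. auto. Qed.

Definition cnt n F := bsum (Nn n) (fun T => Nat.b2n (bitb F T)).

Lemma cnt_le : forall n F, cnt n F <= Nn n.
Proof. intros. unfold cnt. generalize (Nn n). induction n0; simpl; auto. pose proof (b2n_le1 (bitb F n0)). lia. Qed.

Lemma bsum_mono_strict : forall K f g, (forall k, k < K -> f k <= g k) ->
  (exists k, k < K /\ f k < g k) -> bsum K f < bsum K g.
Proof. induction K; intros f g H [k [Hk Hlt]]. lia. simpl.
  assert (bsum K f <= bsum K g). { clear -H. induction K. simpl; lia. simpl. pose proof (H K ltac:(lia)).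
    assert (bsum K f <= bsum K g) by (apply IHK; intros; apply H; lia). lia. }
  destruct (Nat.eq_dec k K). subst. pose proof (H K ltac:(lia)). lia.
  assert (bsum K f < bsum K g). apply IHK. intros; apply H; lia. exists k; split; auto; lia.
  pose proof (H K ltac:(lia)). lia. Qed.

Lemma count_lemma : forall n Sc K, (exists k, k < K /\ forall t, t < Nn n -> bitb (G n Sc (S k)) t = bitb (G n Sc k) t)
  \/ K <= cnt n (G n Sc K).
Proof. intros n Sc K. induction K. right; lia.
  destruct IHK as [[k [Hk He]] | Hc]. left; exists k; split; auto.
  destruct (classic (forall t, t < Nn n -> bitb (G n Sc (S K)) t = bitb (G n Sc K) t)) as [Hs | Hs].
  - left. exists K. split; auto.
  - right. apply not_all_ex_not in Hs. destruct Hs as [t Ht].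
    assert (t < Nn n /\ bitb (G n Sc (S K)) t <> bitb (G n Sc K) t) as [Ht1 Ht2].
    { split. destruct (Nat.lt_ge_cases t (Nn n)); auto. exfalso; apply Ht; intros; lia.
      intro; apply Ht; auto. }
    assert (cnt n (G n Sc K) < cnt n (G n Sc (S K))).
    { unfold cnt. apply bsum_mono_strict.
      - intros k Hk. destruct (bitb (G n Sc K) k) eqn:E. rewrite (G_mono n Sc K k Hk E). auto. simpl; lia.
      - exists t. split; auto. destruct (bitb (G n Sc K) t) eqn:E.
        rewrite (G_mono n Sc K t Ht1 E) in Ht2. congruence.
        destruct (bitb (G n Sc (S K)) t); simpl; congruence || lia. }
    lia. Qed.

Lemma G_S : forall n Sc j, G n Sc (S j) = step n Sc (G n Sc j).
Proof. reflexivity. Qed.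

Lemma fin_fix : forall n Sc, step n Sc (fin n Sc) = fin n Sc.
Proof. intros. destruct (count_lemma n Sc (S (Nn n))) as [[k [Hk He]] | Hc].
  2:{ pose proof (cnt_le n (G n Sc (S (Nn n)))). lia. }
  assert (Hst : forall j, G n Sc (S k + j) = G n Sc (S k)).
  { induction j. rewrite Nat.add_0_r; auto.
    replace (S k + S j) with (S (S k + j)) by lia. rewrite G_S, IHj, G_S.
    apply (step_ext n Sc (G n Sc (S k)) (G n Sc k) He). }
  change (fin n Sc) with (G n Sc (S (Nn n))). rewrite <- G_S.
  replace (S (S (Nn n))) with (S k + S (Nn n - k)) by lia.
  replace (S (Nn n)) with (S k + (Nn n - k)) by lia. rewrite !Hst. auto. Qed.

Lemma fin_complete : forall n Sc T, Cl n Sc T -> T < Nn n /\ bitb (fin n Sc) T = true.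
Proof. intros n Sc T H. induction H.
  - split; auto. rewrite <- fin_fix. rewrite bitb_step by auto. unfold newb. rewrite H0.
    rewrite orb_true_r. auto.
  - split; auto. rewrite <- fin_fix. rewrite bitb_step by auto. unfold newb.
    apply orb_true_iff. right. apply bex_iff. exists S0. split; auto. destruct IHCl as [_ IH].
    rewrite IH. auto. Qed.

Lemma fin_sound : forall n Sc T, T < Nn n -> bitb (fin n Sc) T = true -> Cl n Sc T.
Proof. intros. apply (fin_sound_gen n Sc (S (Nn n))); auto. Qed.

Definition atom_of (L : list (nat * nat)) : atom := (map fst L, map snd L).

Lemma pairsOf_atom_of : forall L, pairsOf (atom_of L) = L.
Proof. unfold pairsOf, atom_of; simpl. induction L as [|[a b] L]; simpl; auto. rewrite IHL; auto. Qed.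

Lemma atom_of_pairsOf : forall d, wf_atom d -> atom_of (pairsOf d) = d.
Proof. intros [x y] H. unfold wf_atom, pairsOf, atom_of, tuple, var in *; simpl in *.
  assert (map fst (combine x y) = x /\ map snd (combine x y) = y) as [-> ->]; auto.
  revert y H. induction x; intros [|b y] H; simpl in *; try lia; auto.
  destruct (IHx y ltac:(lia)) as [-> ->]. auto. Qed.


Lemma E3' : forall Sig A B, derivable Sig (atom_of A) -> derivable Sig (atom_of (A ++ B)).
Proof. intros. unfold atom_of in *. rewrite !map_app. apply D_E3; auto; rewrite !length_map; auto. Qed.
Lemma E4' : forall Sig A B, derivable Sig (atom_of (A ++ B ++ B)) -> derivable Sig (atom_of (A ++ B)).
Proof. intros. unfold atom_of in *. rewrite !map_app in *. apply D_E4; auto; rewrite !length_map; auto. Qed.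
Lemma E5' : forall Sig A B C, derivable Sig (atom_of (A ++ B ++ C)) -> derivable Sig (atom_of (A ++ C ++ B)).
Proof. intros. unfold atom_of in *. rewrite !map_app in *. apply D_E5; auto; rewrite !length_map; auto. Qed.

Lemma perm_der : forall Sig L L', Permutation L L' -> forall pre,
  derivable Sig (atom_of (pre ++ L)) -> derivable Sig (atom_of (pre ++ L')).
Proof. intros Sig L L' HP. induction HP; intros pre H; auto.
  - replace (pre ++ x :: l') with ((pre ++ [x]) ++ l') by (rewrite <- app_assoc; auto).
    apply IHHP. rewrite <- app_assoc. auto.
  - apply (E5' Sig pre [y] (x :: l)) in H.
    replace (pre ++ (x :: l) ++ [y]) with ((pre ++ [x]) ++ l ++ [y]) in H by (rewrite <- !app_assoc; auto).
    apply E5' in H. rewrite <- !app_assoc in H. auto.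
Qed.

Lemma remove_dup : forall Sig p M, In p M -> derivable Sig (atom_of (p :: M)) -> derivable Sig (atom_of M).
Proof. intros. apply in_split in H. destruct H as [A [B ->]].
  assert (Permutation (p :: A ++ p :: B) ((A ++ B) ++ [p] ++ [p])).
  { apply Permutation_sym. eapply perm_trans; [apply Permutation_app_comm|]. simpl.
    apply perm_skip. apply Permutation_middle. }
  apply (perm_der Sig _ _ H []) in H0. simpl in H0. apply (E4' Sig (A ++ B) [p]) in H0.
  assert (Hp : Permutation ((A ++ B) ++ [p]) (A ++ p :: B)).
  { eapply perm_trans; [apply Permutation_app_comm|]. simpl. apply Permutation_middle. }
  apply (perm_der Sig _ _ Hp []) in H0. auto. Qed.

Lemma weaken_list : forall Sig L1 L2, incl L1 L2 -> derivable Sig (atom_of L1) -> derivable Sig (atom_of L2).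
Proof. intros. apply (E3' Sig L1 L2) in H0. clear -H H0. induction L1; auto.
  apply IHL1. intros x Hx; apply H; simpl; auto.
  apply (remove_dup Sig a). apply in_or_app. right. apply H. simpl; auto. auto. Qed.

Lemma weaken_atom : forall Sig a d, wf_atom a -> wf_atom d -> derivable Sig a ->
  incl (pairsOf a) (pairsOf d) -> derivable Sig d.
Proof. intros. rewrite <- (atom_of_pairsOf d) by auto. apply weaken_list with (pairsOf a); auto.
  rewrite atom_of_pairsOf; auto. Qed.

Lemma combine_app' : forall (a b c d : list nat), length a = length c ->
  combine (a ++ b) (c ++ d) = combine a c ++ combine b d.
Proof. induction a; intros b c d H; destruct c; simpl in *; try lia; auto. rewrite IHa; auto. Qed.

Lemma in_combine_diag : forall (l : list nat) i j, In (i, j) (combine l l) -> i = j.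
Proof. induction l; simpl; intros. contradiction. destruct H. inversion H; auto. auto. Qed.

Lemma in_combine_swap : forall (a b : list nat) i j, In (i, j) (combine a b) -> In (j, i) (combine b a).
Proof. induction a; intros [|c b] i j H; simpl in *; auto. destruct H. inversion H; auto. right; auto. Qed.

Lemma in_combine_z : forall (x y z : list nat) i j, length z = length x -> length x = length y ->
  In (i, j) (combine x y) -> exists z0, In z0 z /\ In (z0, i) (combine z x) /\ In (z0, j) (combine z y).
Proof. induction x; intros [|b y] [|c z] i j H1 H2 H; simpl in *; try lia; try contradiction.
  destruct H. inversion H; subst. exists c. auto.
  destruct (IHx y z i j) as [z0 [A [B C]]]; auto. exists z0. auto. Qed.

Definition inb (p : nat * nat) (L : list (nat * nat)) := existsb (fun q => (fst q =? fst p) && (snd q =? snd p)) L.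
Lemma inb_iff : forall p L, inb p L = true <-> In p L.
Proof. intros [i j] L. unfold inb. rewrite existsb_exists. split.
  - intros [[a b] [H1 H2]]. simpl in H2. apply andb_true_iff in H2. destruct H2.
    apply Nat.eqb_eq in H, H0. subst. auto.
  - intros H. exists (i, j). simpl. rewrite !Nat.eqb_refl. auto. Qed.

Definition sgv n v := if v <=? n then v else 0.
Definition smap n (d : atom) : atom := (map (sgv n) (fst d), map (sgv n) (snd d)).
Lemma sgv_le : forall n v, sgv n v <= n.
Proof. intros. unfold sgv. destruct (Nat.leb_spec v n); lia. Qed.
Lemma smap_id : forall n d, atom_vars_le n d -> smap n d = d.
Proof. intros n [x y] [H1 H2]. unfold smap; simpl in *. f_equal.
  - rewrite <- (map_id x) at 2. apply map_ext_in. intros. unfold sgv. apply H1 in H. destruct (Nat.leb_spec a n); lia.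
  - rewrite <- (map_id y) at 2. apply map_ext_in. intros. unfold sgv. apply H2 in H. destruct (Nat.leb_spec a n); lia. Qed.

Definition subset_T n T (d : atom) := forall i j, i <= n -> j <= n -> memb T i j = true -> In (i, j) (pairsOf d).

Lemma forward : forall Sig n, Forall wf_atom Sig -> (forall s, In s Sig -> atom_vars_le n s) ->
  forall d, derivable Sig d -> exists T, T < Nn n /\ Cl n (code_list code_atom Sig) T /\ subset_T n T (smap n d).
Proof. intros Sig n Hwf Hb d Hd. unfold subset_T. induction Hd; unfold var, tuple in *;
  [ rewrite smap_id by auto | unfold pairsOf, smap in *; simpl in * ..].
  - exists (mk n (fun i j => inb (i, j) (pairsOf a))). split. apply mk_lt. split.
    + apply cl_sig. apply mk_lt. apply sigsub_iff; auto. exists a. split; auto. intros.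
      rewrite memb_mk by auto. apply inb_iff; auto.
    + intros. rewrite memb_mk in H2 by auto. apply inb_iff in H2. auto.
  -
    destruct IHHd as [T [HT [HC HS]]]. exists 0. split. apply pow2_pos. split.
    + apply cl_rule with T; auto. apply pow2_pos. apply orb_true_iff. right. unfold r6.
      apply ball_iff. intros i Hi. apply ball_iff. intros j Hj. apply implb_true_iff. intros Hm.
      apply andb_true_iff in Hm. destruct Hm as [Hm Hne]. apply HS in Hm; try lia.
      apply in_combine_diag in Hm. subst. rewrite Nat.eqb_refl in Hne. discriminate.
    + intros. rewrite memb_0 in H2. discriminate.
  -
    destruct IHHd as [T [HT [HC HS]]]. exists (mk n (fun i j => memb T j i)). split. apply mk_lt. split.
    + apply cl_rule with T; auto. apply mk_lt. apply orb_true_iff. left. apply orb_true_iff. right. unfold subTm.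
      apply ball_iff. intros i Hi. apply ball_iff. intros j Hj. apply implb_true_iff. intros Hm.
      rewrite memb_mk by lia. auto.
    + intros. rewrite memb_mk in H2 by auto. apply HS in H2; auto. apply in_combine_swap; auto.
  -
    destruct IHHd as [T [HT [HC HS]]]. exists T. repeat split; auto. intros. rewrite !map_app.
    rewrite combine_app' by (rewrite !length_map; auto). apply in_or_app. left. auto.
  -
    destruct IHHd as [T [HT [HC HS]]]. exists T. repeat split; auto. intros. apply HS in H3; auto.
    rewrite !map_app in *. rewrite !combine_app' in * by (rewrite ?length_app, ?length_map; lia).
    rewrite !in_app_iff in *. tauto.
  -
    destruct IHHd as [T [HT [HC HS]]]. exists T. repeat split; auto. intros. apply HS in H4; auto.
    rewrite !map_app in *. rewrite !combine_app' in * by (rewrite ?length_app, ?length_map; lia).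
    rewrite !in_app_iff in *. tauto.
  -
    destruct IHHd as [T [HT [HC HS]]].
    set (L := combine (map (sgv n) z ++ map (sgv n) z) (map (sgv n) x ++ map (sgv n) y)).
    exists (mk n (fun i j => inb (i, j) L)). split. apply mk_lt. split.
    + apply cl_rule with T; auto. apply mk_lt. apply orb_true_iff. right. unfold r6.
      apply ball_iff. intros i Hi. apply ball_iff. intros j Hj. apply implb_true_iff. intros Hm.
      apply andb_true_iff in Hm. destruct Hm as [Hm Hne]. apply HS in Hm; try lia.
      rewrite !map_app in Hm. rewrite combine_app' in Hm by (rewrite !length_map; auto).
      apply in_app_iff in Hm. destruct Hm as [Hm | Hm].
      2:{ apply in_combine_diag in Hm. subst. rewrite Nat.eqb_refl in Hne. discriminate. }
      destruct (in_combine_z (map (sgv n) x) (map (sgv n) y) (map (sgv n) z) i j) as [z0 [Hz0 [Hzi Hzj]]];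
        try (rewrite !length_map; lia); auto.
      apply bex_iff. exists z0. split.
      { apply in_map_iff in Hz0. destruct Hz0 as [v [<- _]]. pose proof (sgv_le n v). lia. }
      assert (z0 <= n). { apply in_map_iff in Hz0. destruct Hz0 as [v [<- _]]. apply sgv_le. }
      rewrite !memb_mk by lia. apply andb_true_iff. rewrite !inb_iff. unfold L. rewrite combine_app' by (rewrite !length_map; lia).
      rewrite !in_app_iff. auto.
    + intros. rewrite memb_mk in H3 by auto. apply inb_iff in H3. rewrite !map_app. auto.
Qed.

Definition zf n T (p : nat * nat) :=
  match find (fun z => memb T z (fst p) && memb T z (snd p)) (seq 0 (S n)) with Some z => z | None => 0 end.

Lemma zf_spec : forall n T p, (exists z, z < S n /\ memb T z (fst p) && memb T z (snd p) = true) ->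
  zf n T p <= n /\ memb T (zf n T p) (fst p) = true /\ memb T (zf n T p) (snd p) = true.
Proof. intros n T p [z [Hz Hm]]. unfold zf.
  destruct (find _ _) eqn:E.
  - apply find_some in E. destruct E as [E1 E2]. apply in_seq in E1. apply andb_true_iff in E2. split; [lia|tauto].
  - exfalso. eapply find_none in E. rewrite Hm in E. discriminate. apply in_seq. lia. Qed.

Lemma CM : forall (f g : nat * nat -> nat) (L : list (nat * nat)), combine (map f L) (map g L) = map (fun p => (f p, g p)) L.
Proof. induction L; simpl; auto. rewrite IHL; auto. Qed.

Lemma backward : forall Sig n, Forall wf_atom Sig -> (forall s, In s Sig -> atom_vars_le n s) ->
  forall T, Cl n (code_list code_atom Sig) T -> forall d, wf_atom d -> subset_T n T d -> derivable Sig d.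
Proof. intros Sig n Hwf Hb T HC. induction HC; intros d Hd HS; unfold subset_T in *.
  - apply sigsub_iff in H0; auto. destruct H0 as [s [Hs Hf]].
    apply weaken_atom with s; auto. rewrite Forall_forall in Hwf; auto. apply D_hyp; auto.
    intros [i j] Hin. destruct (pairs_bound n s i j (Hb s Hs) Hin). apply HS; auto.
  - rewrite !orb_true_iff in H1. destruct H1 as [[H1 | H1] | H1].
    + apply IHHC; auto. intros i j Hi Hj Hm. apply HS; auto. unfold subm in H1.
      rewrite ball_iff in H1. specialize (H1 i ltac:(lia)). rewrite ball_iff in H1.
      specialize (H1 j ltac:(lia)). rewrite implb_true_iff in H1. auto.
    + destruct d as [x y]. apply D_E2. unfold wf_atom in Hd; simpl in Hd; auto.
      apply IHHC. unfold wf_atom in *; simpl in *; auto.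
      intros i j Hi Hj Hm. unfold subTm in H1.
      rewrite ball_iff in H1. specialize (H1 i ltac:(lia)). rewrite ball_iff in H1.
      specialize (H1 j ltac:(lia)). rewrite implb_true_iff in H1. apply H1 in Hm.
      apply HS in Hm; auto. unfold pairsOf in *; simpl in *. apply in_combine_swap; auto.
    + set (U := list_prod (seq 0 (S n)) (seq 0 (S n))).
      set (LS := filter (fun p => memb S0 (fst p) (snd p)) U).
      set (L1 := filter (fun p => negb (fst p =? snd p)) LS).
      set (L2 := filter (fun p => fst p =? snd p) LS).
      assert (HL : derivable Sig (atom_of (L1 ++ L2))).
      { apply IHHC. unfold wf_atom, atom_of; simpl. rewrite !length_map. auto.
        intros i j Hi Hj Hm. rewrite pairsOf_atom_of. apply in_or_app.
        assert (In (i, j) LS). { apply filter_In. split; auto. apply in_prod; apply in_seq; lia. }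
        destruct (Nat.eqb_spec i j).
        - right. apply filter_In. split; auto. simpl. apply Nat.eqb_eq; auto.
        - left. apply filter_In. split; auto. simpl. apply negb_true_iff, Nat.eqb_neq; auto. }
      unfold atom_of in HL. rewrite !map_app in HL.
      assert (E2 : map snd L2 = map fst L2).
      { apply map_ext_in. intros p Hp. apply filter_In in Hp. destruct Hp as [_ Hp]. apply Nat.eqb_eq in Hp. auto. }
      rewrite E2 in HL.
      apply D_E6 with (z := map (zf n T) L1) in HL; [| rewrite !length_map; auto | rewrite !length_map; auto].
      assert (HZ : forall p, In p L1 -> zf n T p <= n /\ memb T (zf n T p) (fst p) = true /\
                 memb T (zf n T p) (snd p) = true /\ fst p <= n /\ snd p <= n).
      { intros [i j] Hp. apply filter_In in Hp. destruct Hp as [Hp Hne]. apply filter_In in Hp.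
        destruct Hp as [Hp Hm]. apply in_prod_iff in Hp. destruct Hp as [Hi Hj]. apply in_seq in Hi, Hj.
        simpl in *. unfold r6 in H1. rewrite ball_iff in H1. specialize (H1 i ltac:(lia)). rewrite ball_iff in H1.
        specialize (H1 j ltac:(lia)). rewrite implb_true_iff in H1. rewrite Hm, Hne in H1.
        specialize (H1 eq_refl). apply bex_iff in H1. destruct (zf_spec n T (i, j) H1) as [A1 [A2 A3]].
        simpl in *. repeat split; auto; lia. }
      apply weaken_atom with (map (zf n T) L1 ++ map (zf n T) L1, map fst L1 ++ map snd L1); auto.
      * unfold wf_atom; simpl. rewrite !length_app, !length_map. auto.
      * intros [i j] Hin. unfold pairsOf in Hin; simpl in Hin.
        rewrite combine_app' in Hin by (rewrite !length_map; auto). apply in_app_iff in Hin.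
        destruct Hin as [Hin | Hin].
        -- rewrite CM in Hin. apply in_map_iff in Hin. destruct Hin as [p [Hp Hin]].
           inversion Hp; subst. destruct (HZ p Hin) as [A1 [A2 [A3 [A4 A5]]]]. apply HS; auto.
        -- rewrite CM in Hin. apply in_map_iff in Hin. destruct Hin as [p [Hp Hin]].
           inversion Hp; subst. destruct (HZ p Hin) as [A1 [A2 [A3 [A4 A5]]]]. apply HS; auto.
Qed.

Lemma main_iff : forall Sig a, Forall wf_atom Sig -> wf_atom a ->
  (derivable Sig a <-> dec (code_instance Sig a) = true).
Proof. intros Sig a Hwf Ha. set (n := code_instance Sig a).
  assert (Hb : forall s, In s Sig -> atom_vars_le n s) by (intros; apply instance_bound_sig; auto).
  assert (Hba : atom_vars_le n a) by apply instance_bound_a.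
  assert (E1 : unp1 n = code_list code_atom Sig) by apply unp1_pair.
  assert (E2 : unp2 n = code_atom a) by apply unp2_pair.
  unfold dec. rewrite E1, E2. split.
  - intros Hd. destruct (forward Sig n Hwf Hb a Hd) as [T [HT [HC HS]]]. rewrite smap_id in HS by auto.
    apply bex_iff. exists T. split; auto. apply andb_true_iff. split.
    apply fin_complete; auto.
    apply ball_iff. intros i Hi. apply ball_iff. intros j Hj. apply implb_true_iff. intros Hm.
    apply inA_iff; auto. apply HS; auto; lia.
  - intros H. apply bex_iff in H. destruct H as [T [HT Hf]]. apply andb_true_iff in Hf. destruct Hf as [H1 H2].
    apply fin_sound in H1; auto. apply (backward Sig n Hwf Hb T H1 a Ha).
    intros i j Hi Hj Hm. rewrite ball_iff in H2. specialize (H2 i ltac:(lia)). rewrite ball_iff in H2.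
    specialize (H2 j ltac:(lia)). rewrite implb_true_iff in H2. apply inA_iff; auto. Qed.

Theorem theorem2 : decidable_problem derivable.
Proof. destruct dec_computable as [f [Htot Hc]]. exists f. split; auto.
  intros Sig a Hwf Ha. rewrite Hc. apply main_iff; auto. Qed.
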